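(* Let $R=\mathbb{Z}_4+u\mathbb{Z}_4$ with $u^2=0$, let $n$ be odd, and let $\overline{\mu}:R^n\to R^n$, $\overline{\mu}(c_0,\dots,c_{n-1})=(c_0,(1+2u)c_1,\dots,(1+2u)^{n-1}c_{n-1})$. Then $C$ is a cyclic code over $R$ of length $n$ with minimum Lee distance $d_L$ if and only if $\overline{\mu}(C)$ is a $(1+2u)$-constacyclic code over $R$ of length $n$ with the same minimum Lee distance $d_L$.
   Context: Codes are linear ($R$-submodules of $R^n$). Cyclic: invariant under $(c_0,\dots,c_{n-1})\mapsto(c_{n-1},c_0,\dots,c_{n-2})$; $(1+2u)$-constacyclic: invariant under $(c_0,\dots,c_{n-1})\mapsto((1+2u)c_{n-1},c_0,\dots,c_{n-2})$. Lee weight on $\mathbb{Z}_4$: $w_L(0)=0,w_L(1)=w_L(3)=1,w_L(2)=2$; on $R$: $w_L(a+ub)=w_L(b)+w_L(2a+b)$; on $R^n$: sum of component weights; Lee distance $d_L(x,y)=w_L(x-y)$, and the minimum Lee distance of a code is the smallest Lee distance between distinct codewords. *)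

(* Defs.v *)
From mathcomp Require Import all_boot all_order all_algebra.
Set Implicit Arguments. Unset Strict Implicit. Unset Printing Implicit Defensive.
Import GRing.Theory.
Local Open Scope ring_scope.

(* The ring R = Z_4 + u Z_4, u^2 = 0: the element a + u b is the pair (a, b). *)
Definition R := ('Z_4 * 'Z_4)%type.

Definition Rzero : R := (0, 0).
Definition Radd (x y : R) : R := (x.1 + y.1, x.2 + y.2).
Definition Ropp (x : R) : R := (- x.1, - x.2).
Definition Rsub (x y : R) : R := Radd x (Ropp y).
(* (a + u b)(c + u d) = ac + u (ad + bc) since u^2 = 0 *)
Definition Rmul (x y : R) : R := (x.1 * y.1, x.1 * y.2 + x.2 * y.1).
Definition Rone : R := (1, 0).
Definition lam : R := (1, 2%:R).
Fixpoint Rpow (x : R) (k : nat) : R :=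
  match k with O => Rone | S k' => Rmul x (Rpow x k') end.

Definition word n := {ffun 'I_n -> R}.

Definition is_linear_code n (C : {set word n}) : Prop :=
  [/\ [ffun _ => Rzero] \in C,
      (forall x y, x \in C -> y \in C -> [ffun i => Radd (x i) (y i)] \in C)
    & (forall (r : R) x, x \in C -> [ffun i => Rmul r (x i)] \in C)].

Definition cshift n (c : word n) : word n := [ffun i => c (ord_pred i)].
Definition conshift n (a : R) (c : word n) : word n :=
  [ffun i : 'I_n => if val i == 0%N then Rmul a (c (ord_pred i)) else c (ord_pred i)].

Definition is_cyclic_code n (C : {set word n}) : Prop :=
  is_linear_code C /\ forall c, c \in C -> cshift c \in C.
Definition is_constacyclic_code n (a : R) (C : {set word n}) : Prop :=
  is_linear_code C /\ forall c, c \in C -> conshift a c \in C.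

Definition leeZ4 (x : 'Z_4) : nat :=
  match val x with 0 => 0 | 2 => 2 | _ => 1 end%N.
Definition leeR (x : R) : nat := (leeZ4 x.2 + leeZ4 (2%:R * x.1 + x.2)%R)%N.
Definition lee_weight n (c : word n) : nat := (\sum_(i < n) leeR (c i))%N.
Definition lee_dist n (x y : word n) : nat := lee_weight [ffun i => Rsub (x i) (y i)].

Definition min_lee_dist n (C : {set word n}) (d : nat) : Prop :=
  (exists x y, [/\ x \in C, y \in C, x != y & lee_dist x y = d]) /\
  (forall x y, x \in C -> y \in C -> x != y -> (d <= lee_dist x y)%N).

Definition mubar n (c : word n) : word n := [ffun i : 'I_n => Rmul (Rpow lam i) (c i)].

(* Main.v *)
Require Import Defs.
From mathcomp Require Import all_boot all_order all_algebra.
From mathcomp Require Import ring.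
Import GRing.Theory.

Section Helpers.
Local Open Scope ring_scope.

Lemma lamlam : Rmul lam lam = Rone. Proof. by apply/eqP. Qed.
Lemma lamone : Rmul lam Rone = lam. Proof. by apply/eqP. Qed.
Lemma Rmul1 (x : R) : Rmul Rone x = x.
Proof. case: x => a b; rewrite /Rmul /=; congr pair; ring. Qed.
Lemma RmulA (x y z : R) : Rmul x (Rmul y z) = Rmul (Rmul x y) z.
Proof. case: x y z => [a b][c d][e f]; rewrite /Rmul /=; congr pair; ring. Qed.
Lemma RmulC (x y : R) : Rmul x y = Rmul y x.
Proof. case: x y => [a b][c d]; rewrite /Rmul /=; congr pair; ring. Qed.
Lemma RmulD (p x y : R) : Rmul p (Radd x y) = Radd (Rmul p x) (Rmul p y).
Proof. case: p x y => [a b][c d][e f]; rewrite /Rmul /Radd /=; congr pair; ring. Qed.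
Lemma RmulB (p x y : R) : Rmul p (Rsub x y) = Rsub (Rmul p x) (Rmul p y).
Proof. case: p x y => [a b][c d][e f]; rewrite /Rmul /Rsub /Radd /Ropp /=; congr pair; ring. Qed.
Lemma Rmul0 (p : R) : Rmul p Rzero = Rzero.
Proof. case: p => [a b]; rewrite /Rmul /Rzero /=; congr pair; ring. Qed.
Lemma leelam (x : R) : leeR (Rmul lam x) = leeR x.
Proof. case: x => -[[|[|[|[|?]]]] ?] -[[|[|[|[|?]]]] ?] //. Qed.

Lemma Rpow_lam k : Rpow lam k = if odd k then lam else Rone.
Proof.
elim: k => [//|k IH] /=; rewrite IH; case: (odd k) => /=.
  exact: lamlam. exact: lamone.
Qed.

Lemma lam2 (x : R) : Rmul lam (Rmul lam x) = x.
Proof. by rewrite RmulA lamlam Rmul1. Qed.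

Lemma powpow k (x : R) : Rmul (Rpow lam k) (Rmul (Rpow lam k) x) = x.
Proof. rewrite Rpow_lam; case: (odd k); [exact: lam2 | by rewrite !Rmul1]. Qed.

Lemma leepow k x : leeR (Rmul (Rpow lam k) x) = leeR x.
Proof. rewrite Rpow_lam; case: (odd k); [exact: leelam | by rewrite Rmul1]. Qed.

Variable n : nat.

Lemma mubarK (c : word n) : mubar (mubar c) = c.
Proof. by apply/ffunP => i; rewrite !ffunE powpow. Qed.

Lemma mubar_inj : injective (@mubar n).
Proof. exact: (can_inj mubarK). Qed.

Lemma memD (C : {set word n}) x : (x \in @mubar n @: C) = (mubar x \in C).
Proof.
apply/imsetP/idP => [[y Hy ->]|H]; first by rewrite mubarK.
by exists (mubar x); rewrite ?mubarK.
Qed.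

Lemma imK (C : {set word n}) : @mubar n @: (@mubar n @: C) = C.
Proof. by apply/setP => x; rewrite !memD mubarK. Qed.

Lemma lin_mubar (C : {set word n}) : is_linear_code C -> is_linear_code (@mubar n @: C).
Proof.
case=> H0 HD HZ; split.
- rewrite memD; suff -> : mubar [ffun _ => Rzero] = [ffun _ : 'I_n => Rzero] by [].
  by apply/ffunP => i; rewrite !ffunE Rmul0.
- move=> x y; rewrite !memD => Hx Hy.
  suff -> : mubar [ffun i => Radd (x i) (y i)] = [ffun i => Radd (mubar x i) (mubar y i)]
    by apply: HD.
  by apply/ffunP => i; rewrite !ffunE RmulD.
- move=> r x; rewrite !memD => Hx.
  suff -> : mubar [ffun i => Rmul r (x i)] = [ffun i => Rmul r (mubar x i)] by apply: HZ.
  by apply/ffunP => i; rewrite !ffunE !RmulA (RmulC r).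
Qed.

Lemma dist_mubar (x y : word n) : lee_dist (mubar x) (mubar y) = lee_dist x y.
Proof.
rewrite /lee_dist /lee_weight; apply: eq_bigr => i _.
by rewrite !ffunE -RmulB leepow.
Qed.

Lemma min_mubar (C : {set word n}) d : min_lee_dist C d -> min_lee_dist (@mubar n @: C) d.
Proof.
case=> [[x [y [Hx Hy Hxy Hd]]] Hmin]; split.
- exists (mubar x), (mubar y); split; rewrite ?memD ?mubarK //.
  + by rewrite (inj_eq mubar_inj).
  + by rewrite dist_mubar.
- move=> x' y'; rewrite !memD => Hx' Hy' Hn.
  rewrite -dist_mubar; apply: Hmin => //.
  by rewrite (inj_eq mubar_inj).
Qed.

Lemma val_ord_pred (i : 'I_n) :
  val (ord_pred i) = if val i == 0%N then n.-1 else (val i).-1.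
Proof.
case: i => [[|k] Hk] /=.
  by rewrite add0n modn_small // prednK // ltnW.
by rewrite modnDr modn_small // ltnW.
Qed.

Hypothesis Hodd : odd n.

Lemma conshift_mubar (c : word n) :
  conshift lam (mubar c) = [ffun i => Rmul lam (mubar (cshift c) i)].
Proof.
apply/ffunP => i; rewrite !ffunE.
case: eqP => Hi.
- have -> : Rpow lam i = Rone by rewrite Rpow_lam Hi.
  have -> : Rpow lam (ord_pred i) = Rone.
    rewrite Rpow_lam val_ord_pred Hi /=.
    by move: Hodd; case: (n) => //= m; case: (odd m).
  done.
- rewrite val_ord_pred; move: Hi.
  case: i => [[|k] Hk] //= _.
  by rewrite RmulA RmulA lamlam Rmul1.
Qed.

Lemma cyc_to_con (C : {set word n}) :
  is_cyclic_code C -> is_constacyclic_code lam (@mubar n @: C).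
Proof.
case=> Hl Hc; split; first exact: lin_mubar.
have [_ _ HZ] := Hl.
move=> c; rewrite memD => Hc'.
rewrite -(mubarK c) conshift_mubar memD.
suff -> : mubar [ffun i => Rmul lam (mubar (cshift (mubar c)) i)]
          = [ffun i => Rmul lam (cshift (mubar c) i)] by apply: HZ; apply: Hc.
apply/ffunP => i; rewrite !ffunE.
by rewrite RmulA (RmulC _ lam) -RmulA powpow.
Qed.

Lemma con_to_cyc (C : {set word n}) :
  is_constacyclic_code lam (@mubar n @: C) -> is_cyclic_code C.
Proof.
case=> Hl Hc; split; first by rewrite -(imK C); apply: lin_mubar.
have [_ _ HZ] := Hl.
move=> c Hcc.
have H1 : mubar c \in @mubar n @: C by rewrite memD mubarK.
have H2 := HZ lam _ (Hc _ H1).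
rewrite memD in H2.
suff <- : mubar [ffun i => Rmul lam (conshift lam (mubar c) i)] = cshift c by [].
apply/ffunP => i; rewrite conshift_mubar !ffunE.
by rewrite lam2 powpow.
Qed.

End Helpers.

Theorem corollary4p8 (n : nat) (Hodd : odd n) (C : {set word n}) (d : nat) :
  (is_cyclic_code C /\ min_lee_dist C d) <->
  (is_constacyclic_code lam (@mubar n @: C) /\ min_lee_dist (@mubar n @: C) d).
Proof.
split=> [[H1 H2]|[H1 H2]]; split.
- exact: cyc_to_con.
- exact: min_mubar.
- exact: (@con_to_cyc n Hodd C H1).
- by rewrite -(imK _ C); apply: min_mubar.
Qed.
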